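(* Let $\beta_1<\beta_2<\alpha_1<\alpha_2$ be reals and $C_{\alpha_1},C_{\alpha_2},C_{\beta_1},C_{\beta_2}$ nonzero reals. There exist polynomials $A(x)=\sum_{k=0}^4A_kx^{4-k}$ and $B(y)=\sum_{k=0}^4B_ky^{4-k}$ of degree at most $4$ such that $A(\alpha_i)=0$, $B(\beta_i)=0$, $A'(\alpha_i)=2/C_{\alpha_i}$, $B'(\beta_i)=-2/C_{\beta_i}$ ($i=1,2$) and $A_0=-B_0$, $A_1=-B_1$, $A_2=-B_2$, if and only if $$\frac{(\alpha_1+\alpha_2)^2+2\alpha_2^2+(\beta_1+\beta_2)^2+2\beta_1\beta_2-2(2\alpha_2+\alpha_1)(\beta_1+\beta_2)}{(\alpha_2-\alpha_1)^2C_{\alpha_1}}+\frac{(\alpha_1+\alpha_2)^2+2\alpha_1^2+(\beta_1+\beta_2)^2+2\beta_1\beta_2-2(2\alpha_1+\alpha_2)(\beta_1+\beta_2)}{(\alpha_2-\alpha_1)^2C_{\alpha_2}}$$ $$+\frac{(\beta_1+\beta_2)^2+2\beta_2^2+(\alpha_1+\alpha_2)^2+2\alpha_1\alpha_2-2(2\beta_2+\beta_1)(\alpha_1+\alpha_2)}{(\beta_2-\beta_1)^2C_{\beta_1}}+\frac{(\beta_1+\beta_2)^2+2\beta_1^2+(\alpha_1+\alpha_2)^2+2\alpha_1\alpha_2-2(2\beta_1+\beta_2)(\alpha_1+\alpha_2)}{(\beta_2-\beta_1)^2C_{\beta_2}}=0.$$ In this case $A$ and $B$ are uniquely determined. They have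 $A_0=0$ if and only if $$\frac1{(\alpha_2-\alpha_1)^2}\Big(\frac1{C_{\alpha_1}}+\frac1{C_{\alpha_2}}\Big)=\frac1{(\beta_2-\beta_1)^2}\Big(\frac1{C_{\beta_1}}+\frac1{C_{\beta_2}}\Big),$$ and, when both previous equations hold, they satisfy $A_0=0$ and $A_3=-B_3$ if additionally $$\frac1{(\alpha_2-\alpha_1)^2}\Big(\frac{\alpha_2(2\alpha_1+\alpha_2)}{C_{\alpha_1}}+\frac{\alpha_1(2\alpha_2+\alpha_1)}{C_{\alpha_2}}\Big)=\frac1{(\beta_2-\beta_1)^2}\Big(\frac{\beta_2(2\beta_1+\beta_2)}{C_{\beta_1}}+\frac{\beta_1(2\beta_2+\beta_1)}{C_{\beta_2}}\Big).$$ *)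

(* Defs.v *)
From Stdlib Require Import Reals Lra.
Open Scope R_scope.

(* A real polynomial of degree at most 4, written as in the paper:
   P(x) = c0 x^4 + c1 x^3 + c2 x^2 + c3 x + c4  (c_k is the coefficient of x^(4-k)). *)
Record quartic := mkQuartic { qc0 : R; qc1 : R; qc2 : R; qc3 : R; qc4 : R }.

Definition qeval (p : quartic) (x : R) : R :=
  qc0 p * x ^ 4 + qc1 p * x ^ 3 + qc2 p * x ^ 2 + qc3 p * x + qc4 p.

Definition qderiv (p : quartic) (x : R) : R :=
  4 * qc0 p * x ^ 3 + 3 * qc1 p * x ^ 2 + 2 * qc2 p * x + qc3 p.

Lemma qderiv_correct (p : quartic) (x : R) :
  derivable_pt_lim (qeval p) x (qderiv p x).
Proof.
  unfold qeval, qderiv.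
  set (f := fun y => qc0 p * y ^ 4 + qc1 p * y ^ 3 + qc2 p * y ^ 2 + qc3 p * y + qc4 p).
  assert (H : derivable_pt_lim
     (fun y => qc0 p * y ^ 4 + qc1 p * y ^ 3 + qc2 p * y ^ 2 + qc3 p * y + qc4 p) x
     (qc0 p * (INR 4 * x ^ 3) + qc1 p * (INR 3 * x ^ 2) + qc2 p * (INR 2 * x ^ 1)
      + (qc3 p * 1) + 0)).
  { repeat apply derivable_pt_lim_plus.
    - apply derivable_pt_lim_scal. apply derivable_pt_lim_pow.
    - apply derivable_pt_lim_scal. apply derivable_pt_lim_pow.
    - apply derivable_pt_lim_scal. apply derivable_pt_lim_pow.
    - apply derivable_pt_lim_scal. apply derivable_pt_lim_id.
    - apply derivable_pt_lim_const. }
  replace (4 * qc0 p * x ^ 3 + 3 * qc1 p * x ^ 2 + 2 * qc2 p * x + qc3 p)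
    with (qc0 p * (INR 4 * x ^ 3) + qc1 p * (INR 3 * x ^ 2) + qc2 p * (INR 2 * x ^ 1)
      + (qc3 p * 1) + 0) by (simpl; ring).
  exact H.
Qed.

Definition admissible (a1 a2 b1 b2 Ca1 Ca2 Cb1 Cb2 : R) (A B : quartic) : Prop :=
  qeval A a1 = 0 /\ qeval A a2 = 0 /\ qeval B b1 = 0 /\ qeval B b2 = 0 /\
  qderiv A a1 = 2 / Ca1 /\ qderiv A a2 = 2 / Ca2 /\
  qderiv B b1 = - (2 / Cb1) /\ qderiv B b2 = - (2 / Cb2) /\
  qc0 A = - qc0 B /\ qc1 A = - qc1 B /\ qc2 A = - qc2 B.

Definition cond_exist (a1 a2 b1 b2 Ca1 Ca2 Cb1 Cb2 : R) : Prop :=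
  ((a1 + a2) ^ 2 + 2 * a2 ^ 2 + (b1 + b2) ^ 2 + 2 * b1 * b2
     - 2 * (2 * a2 + a1) * (b1 + b2)) / ((a2 - a1) ^ 2 * Ca1)
  + ((a1 + a2) ^ 2 + 2 * a1 ^ 2 + (b1 + b2) ^ 2 + 2 * b1 * b2
     - 2 * (2 * a1 + a2) * (b1 + b2)) / ((a2 - a1) ^ 2 * Ca2)
  + ((b1 + b2) ^ 2 + 2 * b2 ^ 2 + (a1 + a2) ^ 2 + 2 * a1 * a2
     - 2 * (2 * b2 + b1) * (a1 + a2)) / ((b2 - b1) ^ 2 * Cb1)
  + ((b1 + b2) ^ 2 + 2 * b1 ^ 2 + (a1 + a2) ^ 2 + 2 * a1 * a2
     - 2 * (2 * b1 + b2) * (a1 + a2)) / ((b2 - b1) ^ 2 * Cb2)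
  = 0.

Definition cond_A0 (a1 a2 b1 b2 Ca1 Ca2 Cb1 Cb2 : R) : Prop :=
  1 / (a2 - a1) ^ 2 * (1 / Ca1 + 1 / Ca2)
  = 1 / (b2 - b1) ^ 2 * (1 / Cb1 + 1 / Cb2).

Definition cond_A3 (a1 a2 b1 b2 Ca1 Ca2 Cb1 Cb2 : R) : Prop :=
  1 / (a2 - a1) ^ 2 * (a2 * (2 * a1 + a2) / Ca1 + a1 * (2 * a2 + a1) / Ca2)
  = 1 / (b2 - b1) ^ 2 * (b2 * (2 * b1 + b2) / Cb1 + b1 * (2 * b2 + b1) / Cb2).

(* Main.v *)
Require Import Defs.
From Stdlib Require Import Reals Lra.
Open Scope R_scope.

Lemma nz_mul_eq0 (x y : R) : x <> 0 -> y * x = 0 -> y = 0.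
Proof. intros Hx H. apply Rmult_integral in H. destruct H; [auto|contradiction]. Qed.

Lemma cubic0 (a b d1 d2 d3 d4 : R) : a <> b ->
  d1*a^3+d2*a^2+d3*a+d4 = 0 -> d1*b^3+d2*b^2+d3*b+d4 = 0 ->
  3*d1*a^2+2*d2*a+d3 = 0 -> 3*d1*b^2+2*d2*b+d3 = 0 ->
  d1 = 0 /\ d2 = 0 /\ d3 = 0 /\ d4 = 0.
Proof.
  intros Hab E1 E2 E3 E4.
  assert (Hn : a - b <> 0) by (intro; apply Hab; lra).
  assert (H1 : d1 = 0).
  { apply (nz_mul_eq0 ((b-a)*(a-b)^2) d1).
    - apply Rmult_integral_contrapositive_currified; [intro; apply Hab; lra|].
      apply pow_nonzero; auto.
    - transitivity (2*((d1*a^3+d2*a^2+d3*a+d4) - (d1*b^3+d2*b^2+d3*b+d4))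
         - (a-b)*((3*d1*a^2+2*d2*a+d3) + (3*d1*b^2+2*d2*b+d3))); [ring|].
      rewrite E1, E2, E3, E4; ring. }
  subst d1.
  assert (H2 : d2 = 0).
  { apply (nz_mul_eq0 (2*(a-b)) d2).
    - apply Rmult_integral_contrapositive_currified; auto; lra.
    - transitivity ((3*0*a^2+2*d2*a+d3) - (3*0*b^2+2*d2*b+d3)); [ring|].
      rewrite E3, E4; ring. }
  subst d2.
  assert (H3 : d3 = 0) by lra. subst d3.
  repeat split; lra.
Qed.

Definition hq (c a b u v : R) : quartic :=
  mkQuartic c (-2*(a+b)*c + (u+v)/(a-b)^2)
    (((a+b)^2+2*a*b)*c - (u*(a+2*b)+v*(2*a+b))/(a-b)^2)
    (-2*(a+b)*(a*b)*c + (u*b*(2*a+b)+v*a*(2*b+a))/(a-b)^2)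
    ((a*b)^2*c - a*b*(u*b+v*a)/(a-b)^2).

Lemma hq_props (c a b u v : R) : a <> b ->
  qeval (hq c a b u v) a = 0 /\ qeval (hq c a b u v) b = 0 /\
  qderiv (hq c a b u v) a = u /\ qderiv (hq c a b u v) b = v.
Proof.
  intros Hab. assert (Hn : a - b <> 0) by (intro; apply Hab; lra).
  unfold hq, qeval, qderiv; simpl; repeat split; field; auto.
Qed.

Lemma herm (p : quartic) (a b u v : R) : a <> b ->
  qeval p a = 0 -> qeval p b = 0 -> qderiv p a = u -> qderiv p b = v ->
  p = hq (qc0 p) a b u v.
Proof.
  intros Hab E1 E2 E3 E4.
  assert (Hn : a - b <> 0) by (intro; apply Hab; lra).
  destruct p as [c0 c1 c2 c3 c4].
  set (h := hq c0 a b u v).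
  assert (F1 : qeval h a = 0) by (unfold h, hq, qeval; simpl; field; auto).
  assert (F2 : qeval h b = 0) by (unfold h, hq, qeval; simpl; field; auto).
  assert (F3 : qderiv h a = u) by (unfold h, hq, qderiv; simpl; field; auto).
  assert (F4 : qderiv h b = v) by (unfold h, hq, qderiv; simpl; field; auto).
  destruct (cubic0 a b (c1 - qc1 h) (c2 - qc2 h) (c3 - qc3 h) (c4 - qc4 h) Hab)
    as [G1 [G2 [G3 G4]]].
  - transitivity (qeval (mkQuartic c0 c1 c2 c3 c4) a - qeval h a);
      [unfold qeval, h, hq; simpl; ring | rewrite E1, F1; ring].
  - transitivity (qeval (mkQuartic c0 c1 c2 c3 c4) b - qeval h b);
      [unfold qeval, h, hq; simpl; ring | rewrite E2, F2; ring].
  - transitivity (qderiv (mkQuartic c0 c1 c2 c3 c4) a - qderiv h a);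
      [unfold qderiv, h, hq; simpl; ring | rewrite E3, F3; ring].
  - transitivity (qderiv (mkQuartic c0 c1 c2 c3 c4) b - qderiv h b);
      [unfold qderiv, h, hq; simpl; ring | rewrite E4, F4; ring].
  - simpl. unfold h, hq in *; simpl in *. f_equal; lra.
Qed.

Lemma lc1 (x y l1 r1 k1 : R) : l1 = r1 -> x - y = k1*(l1-r1) -> x = y.
Proof. intros H1 H. rewrite H1 in H. apply Rminus_diag_uniq. rewrite H. ring. Qed.
Lemma lc2 (x y l1 r1 k1 l2 r2 k2 : R) : l1 = r1 -> l2 = r2 ->
  x - y = k1*(l1-r1) + k2*(l2-r2) -> x = y.
Proof. intros H1 H2 H. rewrite H1, H2 in H. apply Rminus_diag_uniq. rewrite H. ring. Qed.

Definition Pv (a1 a2 b1 b2 Ca1 Ca2 Cb1 Cb2 : R) : R :=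
  (2/Ca1 + 2/Ca2)/(a1-a2)^2 + (-(2/Cb1) + -(2/Cb2))/(b1-b2)^2.
Definition csol (a1 a2 b1 b2 Ca1 Ca2 Cb1 Cb2 : R) : R :=
  Pv a1 a2 b1 b2 Ca1 Ca2 Cb1 Cb2 / (2*((a1+a2)-(b1+b2))).

Section Main.
Variables (a1 a2 b1 b2 Ca1 Ca2 Cb1 Cb2 : R)
  (Hb : b1 < b2) (Hba : b2 < a1) (Ha : a1 < a2)
  (HCa1 : Ca1 <> 0) (HCa2 : Ca2 <> 0) (HCb1 : Cb1 <> 0) (HCb2 : Cb2 <> 0).

Let Ha12 : a1 <> a2. Proof. lra. Qed.
Let Hb12 : b1 <> b2. Proof. lra. Qed.
Let n1 : a1 - a2 <> 0. Proof. lra. Qed.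
Let n2 : b1 - b2 <> 0. Proof. lra. Qed.
Let n3 : a2 - a1 <> 0. Proof. lra. Qed.
Let n4 : b2 - b1 <> 0. Proof. lra. Qed.
Let n5 : (a1+a2) - (b1+b2) <> 0. Proof. lra. Qed.

Lemma adm_forms A B : admissible a1 a2 b1 b2 Ca1 Ca2 Cb1 Cb2 A B ->
  A = hq (qc0 A) a1 a2 (2/Ca1) (2/Ca2) /\
  B = hq (- qc0 A) b1 b2 (-(2/Cb1)) (-(2/Cb2)).
Proof.
  intros (E1&E2&E3&E4&E5&E6&E7&E8&E9&E10&E11).
  split.
  - apply herm; auto.
  - replace (- qc0 A) with (qc0 B) by lra. apply herm; auto.
Qed.

Lemma adm_c A B : admissible a1 a2 b1 b2 Ca1 Ca2 Cb1 Cb2 A B ->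
  qc0 A = csol a1 a2 b1 b2 Ca1 Ca2 Cb1 Cb2.
Proof.
  intros H. destruct (adm_forms A B H) as [HA HB].
  destruct H as (E1&E2&E3&E4&E5&E6&E7&E8&E9&E10&E11).
  rewrite HA, HB in E10. unfold hq in E10; cbn [qc1] in E10.
  unfold csol, Pv. apply (lc1 _ _ _ _ (-1/(2*((a1+a2)-(b1+b2)))) E10).
  field. repeat split; auto.
Qed.
Lemma adm_cond A B : admissible a1 a2 b1 b2 Ca1 Ca2 Cb1 Cb2 A B ->
  cond_exist a1 a2 b1 b2 Ca1 Ca2 Cb1 Cb2.
Proof.
  intros H. destruct (adm_forms A B H) as [HA HB].
  destruct H as (E1&E2&E3&E4&E5&E6&E7&E8&E9&E10&E11).
  rewrite HA, HB in E10, E11. unfold hq in E10, E11; cbn [qc1 qc2] in E10, E11.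
  unfold cond_exist.
  apply (lc2 _ _ _ _ (-((a1+a2)^2+2*a1*a2-(b1+b2)^2-2*b1*b2)/2) _ _
     (-((a1+a2)-(b1+b2))) E10 E11).
  field. repeat split; auto.
Qed.

Lemma cond_adm : cond_exist a1 a2 b1 b2 Ca1 Ca2 Cb1 Cb2 ->
  admissible a1 a2 b1 b2 Ca1 Ca2 Cb1 Cb2
   (hq (csol a1 a2 b1 b2 Ca1 Ca2 Cb1 Cb2) a1 a2 (2/Ca1) (2/Ca2))
   (hq (- csol a1 a2 b1 b2 Ca1 Ca2 Cb1 Cb2) b1 b2 (-(2/Cb1)) (-(2/Cb2))).
Proof.
  intros Hc.
  destruct (hq_props (csol a1 a2 b1 b2 Ca1 Ca2 Cb1 Cb2) a1 a2 (2/Ca1) (2/Ca2) Ha12)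
    as (F1&F2&F3&F4).
  destruct (hq_props (- csol a1 a2 b1 b2 Ca1 Ca2 Cb1 Cb2) b1 b2 (-(2/Cb1)) (-(2/Cb2)) Hb12)
    as (G1&G2&G3&G4).
  unfold admissible. repeat split; auto.
  - unfold hq; cbn [qc0]. ring.
  - unfold hq; cbn [qc1]. unfold csol, Pv. field. repeat split; auto.
  - unfold cond_exist in Hc. unfold hq; cbn [qc2].
    apply (lc1 _ _ _ _ (-1/((a1+a2)-(b1+b2))) Hc).
    unfold csol, Pv. field. repeat split; auto.
Qed.
Lemma adm_A0 A B : admissible a1 a2 b1 b2 Ca1 Ca2 Cb1 Cb2 A B ->
  (qc0 A = 0 <-> cond_A0 a1 a2 b1 b2 Ca1 Ca2 Cb1 Cb2).
Proof.
  intros H. rewrite (adm_c A B H). unfold cond_A0. split; intros E.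
  - apply (lc1 _ _ _ _ ((a1+a2)-(b1+b2)) E). unfold csol, Pv. field. repeat split; auto.
  - apply (lc1 _ _ _ _ (1/((a1+a2)-(b1+b2))) E). unfold csol, Pv. field. repeat split; auto.
Qed.

Lemma adm_A3 A B : admissible a1 a2 b1 b2 Ca1 Ca2 Cb1 Cb2 A B ->
  cond_A0 a1 a2 b1 b2 Ca1 Ca2 Cb1 Cb2 ->
  cond_A3 a1 a2 b1 b2 Ca1 Ca2 Cb1 Cb2 ->
  qc0 A = 0 /\ qc3 A = - qc3 B.
Proof.
  intros H H0 H3.
  assert (Hc : qc0 A = 0) by (apply (adm_A0 A B H); auto).
  split; auto.
  destruct (adm_forms A B H) as [HA HB].
  rewrite HA, HB. unfold hq; cbn [qc3]. unfold cond_A3 in H3.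
  apply (lc2 _ _ _ _ 2 _ _ (-2*(a1+a2)*(a1*a2) + 2*(b1+b2)*(b1*b2)) H3 Hc).
  field. repeat split; auto.
Qed.
End Main.


Theorem mainTheorem7 (a1 a2 b1 b2 Ca1 Ca2 Cb1 Cb2 : R)
  (Hb : b1 < b2) (Hba : b2 < a1) (Ha : a1 < a2)
  (HCa1 : Ca1 <> 0) (HCa2 : Ca2 <> 0) (HCb1 : Cb1 <> 0) (HCb2 : Cb2 <> 0) :
  ((exists A B : quartic, admissible a1 a2 b1 b2 Ca1 Ca2 Cb1 Cb2 A B)
     <-> cond_exist a1 a2 b1 b2 Ca1 Ca2 Cb1 Cb2) /\
  (forall A B A' B' : quartic,
     admissible a1 a2 b1 b2 Ca1 Ca2 Cb1 Cb2 A B ->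
     admissible a1 a2 b1 b2 Ca1 Ca2 Cb1 Cb2 A' B' -> A = A' /\ B = B') /\
  (forall A B : quartic, admissible a1 a2 b1 b2 Ca1 Ca2 Cb1 Cb2 A B ->
     (qc0 A = 0 <-> cond_A0 a1 a2 b1 b2 Ca1 Ca2 Cb1 Cb2)) /\
  (forall A B : quartic, admissible a1 a2 b1 b2 Ca1 Ca2 Cb1 Cb2 A B ->
     cond_A0 a1 a2 b1 b2 Ca1 Ca2 Cb1 Cb2 ->
     cond_A3 a1 a2 b1 b2 Ca1 Ca2 Cb1 Cb2 ->
     qc0 A = 0 /\ qc3 A = - qc3 B).
Proof.
  split; [|split; [|split]].
  - split.
    + intros (A & B & H). exact (adm_cond _ _ _ _ _ _ _ _ Hb Hba Ha HCa1 HCa2 HCb1 HCb2 A B H).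
    + intros Hc. eexists; eexists. exact (cond_adm _ _ _ _ _ _ _ _ Hb Hba Ha HCa1 HCa2 HCb1 HCb2 Hc).
  - intros A B A' B' H H'.
    destruct (adm_forms _ _ _ _ _ _ _ _ Hb Hba Ha A B H) as [HA HB].
    destruct (adm_forms _ _ _ _ _ _ _ _ Hb Hba Ha A' B' H') as [HA' HB'].
    rewrite (adm_c _ _ _ _ _ _ _ _ Hb Hba Ha HCa1 HCa2 HCb1 HCb2 A B H) in HA, HB.
    rewrite (adm_c _ _ _ _ _ _ _ _ Hb Hba Ha HCa1 HCa2 HCb1 HCb2 A' B' H') in HA', HB'.
    split; congruence.
  - intros A B H. exact (adm_A0 _ _ _ _ _ _ _ _ Hb Hba Ha HCa1 HCa2 HCb1 HCb2 A B H).
  - intros A B H H0 H3. exact (adm_A3 _ _ _ _ _ _ _ _ Hb Hba Ha HCa1 HCa2 HCb1 HCb2 A B H H0 H3).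
Qed.
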